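(* Let $n\ge 2$ and let $\Phi$ be any quantum channel on $\mathcal D_n$. Then $$\operatorname{tr}\big(\sigma^\Phi\big)^2 \;\le\; 1-\frac{n+1}{n}\Big(1-e^{-S_2^{\min}(\Phi)}\Big),$$ i.e. if $\operatorname{tr}\big(\Phi(|\varphi\rangle\langle\varphi|)\big)^2\le 1-\epsilon$ for every unit vector $\varphi\in\mathbb C^n$, then $\operatorname{tr}(\sigma^\Phi)^2\le 1-\epsilon(n+1)/n$. Equivalently, $S_2^{\mathrm{map}}(\Phi)\ge S_2^{\mathrm{map}}(\Lambda_n)$ for any depolarizing channel $\Lambda_n$ with $S_2^{\min}(\Lambda_n)=S_2^{\min}(\Phi)$; that is, among all channels on $\mathcal D_n$ with a given minimal output Renyi-2 entropy, the depolarizing channel has the smallest Renyi-2 map entropy. Equivalently again, $$S_2^{\min}(\Phi)\;\le\; -\log\Big(\frac{1+n\,e^{-S_2^{\mathrm{map}}(\Phi)}}{n+1}\Big),$$ with equality when $\Phi$ is a depolarizing channel.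
   Context: $\mathcal D_n$ denotes the set of $n\times n$ density matrices (positive semidefinite, trace one). A quantum channel on $\mathcal D_n$ is a linear, completely positive, trace-preserving map; equivalently $\Phi(\rho)=\sum_\alpha K_\alpha\rho K_\alpha^\dagger$ with $\sum_\alpha K_\alpha^\dagger K_\alpha=\mathbb 1$. The Jamiołkowski state of $\Phi$ is $\sigma^\Phi=(\Phi\otimes\mathrm{id})(|\phi_+\rangle\langle\phi_+|)\in\mathcal D_{n^2}$, where $|\phi_+\rangle=\frac1{\sqrt n}\sum_{i=1}^n|i\rangle\otimes|i\rangle$. The Renyi entropy of order $q$ is $S_q(\rho)=\frac1{1-q}\log\operatorname{tr}\rho^q$ (with the von Neumann entropy $-\operatorname{tr}\rho\log\rho$ at $q=1$). The minimal output entropy is $S_q^{\min}(\Phi)=\min_{\rho\in\mathcal D_n}S_q(\Phi(\rho))$ and the map entropy is $S_q^{\mathrm{map}}(\Phi)=S_q(\sigma^\Phi)$. The depolarizing channels are $\Lambda_n(\rho)=\lambda\rho+(1-\lambda)\frac1n\mathbb 1$ with $\lambda\in[-\frac1{n^2-1},1]$; for them $S_2^{\min}(\Lambda_n)=-\log\frac{1+(n-1)\lambda^2}{n}$ and $S_2^{\mathrm{map}}(\Lambda_n)=-\log\frac{1+(n^2-1)\lambda^2}{n^2}$. *)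

(* Defs.v *)
(* Complex scalars: an arbitrary numClosedFieldType C
   (e.g. algC); all quantities are algebraic, so this is the natural
   generic setting. *)
From HB Require Import structures.
From mathcomp Require Import all_boot all_order all_algebra.
Set Implicit Arguments. Unset Strict Implicit. Unset Printing Implicit Defensive.
Import Order.TTheory GRing.Theory Num.Theory.
Local Open Scope ring_scope.

Section QDefs.
Variable C : numClosedFieldType.

Definition adj m n (A : 'M[C]_(m, n)) : 'M[C]_(n, m) := \matrix_(i, j) (A j i)^*.

(* split an index of 'I_(m*n) into the pair (i,j) (inverse of mxvec_index) *)
Definition pair_of_index m n (k : 'I_(m * n)) : 'I_m * 'I_n :=
  enum_val (cast_ord (esym (mxvec_cast m n)) k).

(* Kronecker product A (x) B, index (i,j) <-> mxvec_index i j *)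
Definition kron m1 n1 m2 n2 (A : 'M[C]_(m1, n1)) (B : 'M[C]_(m2, n2))
  : 'M[C]_(m1 * m2, n1 * n2) :=
  \matrix_(k, l) (A (pair_of_index k).1 (pair_of_index l).1 *
                  B (pair_of_index k).2 (pair_of_index l).2).

(* A quantum channel given in Kraus form: Phi(rho) = sum_a K_a rho K_a^dag *)
Definition kraus_apply n (K : seq 'M[C]_n) (rho : 'M[C]_n) : 'M[C]_n :=
  \sum_(k <- K) (k *m rho *m adj k).

Definition trace_preserving n (K : seq 'M[C]_n) : Prop :=
  \sum_(k <- K) (adj k *m k) = 1%:M.

Definition unit_mx n (i j : 'I_n) : 'M[C]_n := delta_mx i j.

(* Jamiolkowski state sigma^Phi = (Phi (x) id)(|phi+><phi+|)
   = (1/n) sum_{i,j} Phi(|i><j|) (x) |i><j| *)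
Definition jamiolkowski n (K : seq 'M[C]_n) : 'M[C]_(n * n) :=
  (n%:R)^-1 *: \sum_(i < n) \sum_(j < n)
     kron (kraus_apply K (unit_mx i j)) (unit_mx i j).

Definition purity n (rho : 'M[C]_n) : C := \tr (rho *m rho).

End QDefs.

(* Main.v *)
Require Import Defs.
From HB Require Import structures.
From mathcomp Require Import all_boot all_order all_algebra.
Set Implicit Arguments. Unset Strict Implicit. Unset Printing Implicit Defensive.
Import Order.TTheory GRing.Theory Num.Theory.
Local Open Scope ring_scope.

Lemma cadjE (C : numClosedFieldType) m n (A : 'M[C]_(m,n)) i j : adj A i j = (A j i)^*.
Proof. by rewrite mxE. Qed.

Lemma cadj_mul (C : numClosedFieldType) m n p (A : 'M[C]_(m,n)) (B : 'M[C]_(n,p)) :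
  adj (A *m B) = adj B *m adj A.
Proof.
apply/matrixP=> i j; rewrite !mxE rmorph_sum; apply: eq_bigr => k _.
by rewrite !mxE rmorphM mulrC.
Qed.

Lemma cadjK (C : numClosedFieldType) m n (A : 'M[C]_(m,n)) : adj (adj A) = A.
Proof. by apply/matrixP=> i j; rewrite !mxE conjCK. Qed.

Lemma cadjD (C : numClosedFieldType) m n (A B : 'M[C]_(m,n)) : adj (A + B) = adj A + adj B.
Proof. by apply/matrixP=> i j; rewrite !mxE rmorphD. Qed.

Lemma cadjN (C : numClosedFieldType) m n (A : 'M[C]_(m,n)) : adj (- A) = - adj A.
Proof. by apply/matrixP=> i j; rewrite !mxE rmorphN. Qed.

Lemma cadjZ (C : numClosedFieldType) m n (s : C) (A : 'M[C]_(m,n)) : adj (s *: A) = s^* *: adj A.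
Proof. by apply/matrixP=> i j; rewrite !mxE rmorphM. Qed.

Lemma cadj1 (C : numClosedFieldType) n : adj (1%:M : 'M[C]_n) = 1%:M.
Proof. by apply/matrixP=> i j; rewrite !mxE eq_sym; case: (i == j); rewrite ?conjC1 ?conjC0. Qed.

Lemma cadj_sum (C : numClosedFieldType) m n I (r : seq I) (F : I -> 'M[C]_(m,n)) :
  adj (\sum_(k <- r) F k) = \sum_(k <- r) adj (F k).
Proof.
apply/matrixP=> i j; rewrite !mxE summxE rmorph_sum; rewrite summxE.
by apply: eq_bigr => k _; rewrite mxE.
Qed.

Lemma tr11 (C : numClosedFieldType) (A : 'M[C]_1) : \tr A = A 0 0.
Proof. by rewrite /mxtrace big_ord1. Qed.

Definition q (C : numClosedFieldType) n (x : 'cV[C]_n) (A : 'M[C]_n) : C :=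
  (adj x *m A *m x) 0 0.

Lemma Tr4 (C : numClosedFieldType) n (A B : 'M[C]_n) (x y : 'cV[C]_n) :
  \tr (A *m (x *m adj y) *m adj A *m (B *m (y *m adj x) *m adj B))
  = q y (adj A *m B) * q x (adj B *m A).
Proof.
have -> : A *m (x *m adj y) *m adj A *m (B *m (y *m adj x) *m adj B)
   = A *m x *m (adj y *m (adj A *m B) *m y) *m (adj x *m adj B).
  by rewrite !mulmxA.
rewrite [adj y *m _ *m _]mx11_scalar mul_mx_scalar -scalemxAl linearZ /=.
rewrite mxtrace_mulC tr11 /q; congr (_ * _).
by rewrite !mulmxA.
Qed.

Lemma purity_pair (C : numClosedFieldType) n (K : seq 'M[C]_n) (x y : 'cV[C]_n) :
  \tr (kraus_apply K (x *m adj y) *m kraus_apply K (y *m adj x))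
  = \sum_(k <- K) \sum_(l <- K) q y (adj k *m l) * q x (adj l *m k).
Proof.
rewrite /kraus_apply mulmx_suml linear_sum; apply: eq_bigr => k _.
rewrite mulmx_sumr linear_sum; apply: eq_bigr => l _.
exact: Tr4.
Qed.

Lemma purity_vec (C : numClosedFieldType) n (K : seq 'M[C]_n) (x : 'cV[C]_n) :
  purity (kraus_apply K (x *m adj x))
  = \sum_(k <- K) \sum_(l <- K) q x (adj k *m l) * q x (adj l *m k).
Proof. exact: purity_pair. Qed.

Lemma qE (C : numClosedFieldType) n (x : 'cV[C]_n) (A : 'M[C]_n) :
  q x A = \sum_a \sum_b (x a 0)^* * A a b * x b 0.
Proof.
rewrite /q mxE exchange_big; apply: eq_bigr => b _; rewrite mxE mulr_suml.
by apply: eq_bigr => a _; rewrite !mxE.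
Qed.

Definition ev (C : numClosedFieldType) n (i : 'I_n) : 'cV[C]_n := delta_mx i 0.

Lemma adj_ev (C : numClosedFieldType) n (i : 'I_n) : adj (ev C i) = delta_mx 0 i.
Proof.
apply/matrixP=> a b; rewrite !mxE andbC; case: (_ && _); by rewrite ?conjC1 ?conjC0.
Qed.

Lemma q_ev (C : numClosedFieldType) n (i : 'I_n) (A : 'M[C]_n) : q (ev C i) A = A i i.
Proof. by rewrite /q adj_ev -rowE /ev -colE !mxE. Qed.

Lemma unit_ev (C : numClosedFieldType) n (i j : 'I_n) : unit_mx C i j = ev C i *m adj (ev C j).
Proof. by rewrite adj_ev /ev mul_delta_mx. Qed.

Lemma ev_unit (C : numClosedFieldType) n (i : 'I_n) : adj (ev C i) *m ev C i = 1%:M.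
Proof. by rewrite adj_ev /ev mul_delta_mx; apply/matrixP=> a b; rewrite !mxE !ord1. Qed.

Lemma q_scale (C : numClosedFieldType) n (s : C) (x : 'cV[C]_n) A :
  q (s *: x) A = s^* * s * q x A.
Proof. by rewrite /q cadjZ -!scalemxAl !scalemxAr scalerA -scalemxAr mxE. Qed.

Lemma sum_pair (C : numClosedFieldType) m n (F : 'I_m -> 'I_n -> C) :
  \sum_(k < m * n) F (pair_of_index k).1 (pair_of_index k).2 = \sum_i \sum_j F i j.
Proof.
rewrite /pair_of_index.
rewrite (reindex (cast_ord (mxvec_cast m n))) /=; last first.
  by exists (cast_ord (esym (mxvec_cast m n))) => k _; rewrite ?cast_ordK ?cast_ordKV.
under eq_bigr do rewrite cast_ordK.
rewrite -(big_enum_val (fun x : 'I_m * 'I_n => F x.1 x.2)).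
by rewrite pair_big.
Qed.

Lemma trmul (C : numClosedFieldType) n (A B : 'M[C]_n) :
  \tr (A *m B) = \sum_p \sum_q A p q * B q p.
Proof. by apply: eq_bigr => p _; rewrite mxE. Qed.

Lemma sum_delta (C : numClosedFieldType) n (a : 'I_n) (F : 'I_n -> C) :
  \sum_i F i * (a == i)%:R = F a.
Proof.
rewrite (bigD1 a) //= eqxx mulr1 big1 ?addr0 // => i /negPf.
by rewrite eq_sym => ->; rewrite mulr0.
Qed.

Lemma jam_entry (C : numClosedFieldType) n (K : seq 'M[C]_n) p r :
  jamiolkowski K p r = n%:R^-1 *
    kraus_apply K (unit_mx C (pair_of_index p).2 (pair_of_index r).2)
       (pair_of_index p).1 (pair_of_index r).1.
Proof.
rewrite /jamiolkowski mxE summxE; congr (_ * _).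
rewrite (eq_bigr (fun i => kraus_apply K (unit_mx C i (pair_of_index r).2)
       (pair_of_index p).1 (pair_of_index r).1 * ((pair_of_index p).2 == i)%:R)).
  by rewrite sum_delta.
move=> i _; rewrite summxE.
rewrite (eq_bigr (fun j => kraus_apply K (unit_mx C i j)
       (pair_of_index p).1 (pair_of_index r).1 * ((pair_of_index p).2 == i)%:R
        * ((pair_of_index r).2 == j)%:R)).
  by rewrite sum_delta.
move=> j _; rewrite mxE /unit_mx mxE -mulrA; congr (_ * _).
by rewrite -natrM mulnb.
Qed.

Lemma jam_purity (C : numClosedFieldType) n (K : seq 'M[C]_n) :
  purity (jamiolkowski K) = (n%:R ^+ 2)^-1 *
    \sum_(k <- K) \sum_(l <- K) \tr (adj k *m l) * \tr (adj l *m k).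
Proof.
rewrite /purity trmul.
under eq_bigr do under eq_bigr do rewrite !jam_entry.
rewrite (sum_pair (fun p1 p2 => \sum_r n%:R^-1 *
    kraus_apply K (unit_mx C p2 (pair_of_index r).2) p1 (pair_of_index r).1 *
    (n%:R^-1 * kraus_apply K (unit_mx C (pair_of_index r).2 p2) (pair_of_index r).1 p1))).
under eq_bigr do under eq_bigr do rewrite (sum_pair (fun q1 q2 => n%:R^-1 *
    kraus_apply K (unit_mx C _ q2) _ q1 *
    (n%:R^-1 * kraus_apply K (unit_mx C q2 _) q1 _))).
have E1 : forall i j : 'I_n, \tr (kraus_apply K (unit_mx C i j) *m kraus_apply K (unit_mx C j i))
   = \sum_(k <- K) \sum_(l <- K) (adj k *m l) j j * (adj l *m k) i i.
  move=> i j; rewrite !unit_ev purity_pair.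
  by apply: eq_bigr => k _; apply: eq_bigr => l _; rewrite !q_ev.
have E2 : \sum_(k <- K) \sum_(l <- K) \tr (adj k *m l) * \tr (adj l *m k)
   = \sum_i \sum_j \tr (kraus_apply K (unit_mx C i j) *m kraus_apply K (unit_mx C j i)).
  under [RHS]eq_bigr do under eq_bigr do rewrite E1.
  under [RHS]eq_bigr do rewrite exchange_big.
  rewrite [RHS]exchange_big; apply: eq_bigr => k _.
  under [RHS]eq_bigr do rewrite exchange_big.
  rewrite [RHS]exchange_big; apply: eq_bigr => l _.
  rewrite /mxtrace mulr_suml exchange_big; apply: eq_bigr => i _.
  rewrite mulr_sumr; apply: eq_bigr => j _.
  by rewrite mulrC.
rewrite E2 mulr_sumr exchange_big; apply: eq_bigr => i _.
rewrite mulr_sumr; under eq_bigr do rewrite exchange_big.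
rewrite exchange_big; apply: eq_bigr => j _.
rewrite trmul mulr_sumr; apply: eq_bigr => a _.
rewrite mulr_sumr; apply: eq_bigr => b _.
by rewrite mulrACA -invfM -expr2.
Qed.

Lemma i4 (C : numClosedFieldType) : ('i : C) ^+ 4 = 1.
Proof. by rewrite (exprM _ 2 2) sqrCi sqrrN expr1n. Qed.

Lemma iexp_mod (C : numClosedFieldType) k : ('i : C) ^+ k = 'i ^+ (k %% 4).
Proof. by rewrite {1}(divn_eq k 4) exprD mulnC exprM i4 expr1n mul1r. Qed.

Lemma conj_iexp (C : numClosedFieldType) k : (('i : C) ^+ k)^* = 'i ^+ (3 * k).
Proof.
rewrite rmorphXn /= conjCi exprM; congr (_ ^+ _).
by rewrite exprS sqrCi mulrN1.
Qed.

Lemma neg1_neq1 (C : numClosedFieldType) : (-1 : C) != 1.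
Proof.
apply/negP=> /eqP h; have : (2%:R : C) == 0 by rewrite -[2%N]/(1+1)%N natrD -{1}h addNr.
by rewrite pnatr_eq0.
Qed.

Lemma i_neq1 (C : numClosedFieldType) : ('i : C) != 1.
Proof.
apply/negP=> /eqP h; have := sqrCi C; rewrite h expr1n => /esym/eqP.
by rewrite (negPf (neg1_neq1 C)).
Qed.

Lemma iexp_neq1 (C : numClosedFieldType) m : ~~ (4 %| m)%N -> ('i : C) ^+ m != 1.
Proof.
rewrite iexp_mod /dvdn; have : (m %% 4 < 4)%N by rewrite ltn_mod.
case: (m %% 4)%N => [|[|[|[|r]]]] // _ _.
- by rewrite expr1 i_neq1.
- by rewrite sqrCi neg1_neq1.
- apply/negP=> /eqP h; have : ('i : C) ^+ 4 = 'i by rewrite exprS h mulr1.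
  by rewrite i4 => /esym/eqP; rewrite (negPf (i_neq1 C)).
Qed.

Lemma sum4 (C : numClosedFieldType) m :
  \sum_(s < 4) ('i : C) ^+ (m * s) = if (4 %| m)%N then 4%:R else 0.
Proof.
under eq_bigr do rewrite exprM.
case: ifP => h.
  rewrite (iexp_mod C m) (eqP h) expr0; under eq_bigr do rewrite expr1n.
  by rewrite sumr_const card_ord.
have hx := iexp_neq1 C (negbT h).
have : (('i : C) ^+ m - 1) * \sum_(s < 4) ('i ^+ m) ^+ s = 0.
  by rewrite -subrX1 -exprM mulnC exprM i4 expr1n subrr.
by move/eqP; rewrite mulf_eq0 subr_eq0 (negPf hx) /= => /eqP.
Qed.

Lemma prod_if (C : numClosedFieldType) n (P : pred 'I_n) (c : C) :
  \prod_(x < n) (if P x then c else 0) = if [forall x, P x] then c ^+ n else 0.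
Proof.
case: forallP => h.
  by rewrite (eq_bigr (fun _ => c)) ?prodr_const ?card_ord // => x _; rewrite h.
have [x hx] : exists x, ~~ P x.
  by apply/existsP; rewrite -negb_forall; apply/forallP.
by rewrite (bigD1 x) //= (negPf hx) mul0r.
Qed.

Definition mexp n (a b c d x : 'I_n) : nat :=
  (3 * (x == a) + (x == b) + 3 * (x == c) + (x == d))%N.

Lemma comb n (a b c d : 'I_n) :
  [forall x, 4 %| mexp a b c d x]%N = ((a == b) && (c == d)) || ((a == d) && (c == b)).
Proof.
apply/forallP/idP.
  move=> H; case: (eqVneq a b) => [?|nab] /=.
    subst b; case: (eqVneq a c) => [?|nac] /=.
      by subst c; have := H a; rewrite /mexp !eqxx /=; case: (a == d).
    have := H c; rewrite /mexp eqxx (eq_sym c a) (negPf nac) /=.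
    by case: (c == d).
  have := H a; rewrite /mexp eqxx (negPf nab) /=.
  case: (eqVneq a c) => [?|nac]; first by subst c; case: (a == d).
  case: (eqVneq a d) => [?|nad] //= _; subst d.
  have := H b; rewrite /mexp eqxx (eq_sym b a) (negPf nab) /=.
  by rewrite (eq_sym c b); case: (b == c).
by case/orP=> /andP[/eqP <- /eqP <-] x; rewrite /mexp; case: (x == a); case: (x == c).
Qed.

Definition uvec (C : numClosedFieldType) n (t : {ffun 'I_n -> 'I_4}) : 'cV[C]_n :=
  \col_x ('i ^+ t x).

Lemma sumn_delta n (a : 'I_n) (f : 'I_n -> nat) : (\sum_(x < n) (x == a) * f x)%N = f a.
Proof.
rewrite (bigD1 a) //= eqxx mul1n big1 ?addn0 // => x /negPf ->; by rewrite mul0n.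
Qed.

Lemma sum_mexp n (a b c d : 'I_n) (f : 'I_n -> nat) :
  (\sum_x mexp a b c d x * f x)%N = (3 * f a + f b + 3 * f c + f d)%N.
Proof.
rewrite /mexp.
under eq_bigr do rewrite !mulnDl.
rewrite !big_split /= !sumn_delta big1 // addn0.

Qed.

Lemma W (C : numClosedFieldType) n (a b c d : 'I_n) :
  \sum_(t : {ffun 'I_n -> 'I_4})
     (uvec C t a 0)^* * uvec C t b 0 * ((uvec C t c 0)^* * uvec C t d 0)
  = (4 ^ n)%:R * (((a == b) && (c == d)) || ((a == d) && (c == b)))%:R.
Proof.
have E : forall t : {ffun 'I_n -> 'I_4},
   (uvec C t a 0)^* * uvec C t b 0 * ((uvec C t c 0)^* * uvec C t d 0)
   = \prod_x ('i : C) ^+ (mexp a b c d x * t x).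
  move=> t; rewrite prodrXr sum_mexp !mxE !conj_iexp -!exprD.
  by rewrite !addnA.
under eq_bigr do rewrite E.
rewrite -(bigA_distr_bigA (fun x (s : 'I_4) => ('i : C) ^+ (mexp a b c d x * s))).
under eq_bigr do rewrite sum4.
rewrite prod_if comb natrX.
by case: (_ || _); rewrite ?mulr1 ?mulr0.
Qed.

Lemma inner (C : numClosedFieldType) n (B : 'M[C]_n) (a b : 'I_n) :
  \sum_c \sum_d B c d * (((a == b) && (c == d)) || ((a == d) && (c == b)))%:R
  = B b a + (a == b)%:R * (\tr B - B a a).
Proof.
case: (eqVneq a b) => [<-|nab] /=.
  rewrite mul1r addrC subrK /mxtrace; apply: eq_bigr => c _.
  rewrite -[RHS](sum_delta c (fun d => B c d)); apply: eq_bigr => d _.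
  congr (_ * _%:R).
  case: (eqVneq c d) => [//|ncd] /=.
  case: (eqVneq c a) => [ca|]; last by rewrite andbF.
  by subst c; rewrite (negPf ncd).
rewrite mul0r addr0 -(sum_delta b (fun c => B c a)).
apply: eq_bigr => c _; rewrite -(sum_delta a (fun d => B c d)) mulr_suml.
apply: eq_bigr => d _; rewrite -mulrA -natrM mulnb (eq_sym b c) andbC.
by [].
Qed.

Lemma qq_sum (C : numClosedFieldType) n (A B : 'M[C]_n) :
  \sum_(t : {ffun 'I_n -> 'I_4}) q (uvec C t) A * q (uvec C t) B
  = (4 ^ n)%:R * \sum_a \sum_b A a b * (\sum_c \sum_d B c d *
        (((a == b) && (c == d)) || ((a == d) && (c == b)))%:R).
Proof.
have E : forall t : {ffun 'I_n -> 'I_4}, q (uvec C t) A * q (uvec C t) B =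
  \sum_a \sum_b \sum_c \sum_d A a b * B c d *
     ((uvec C t a 0)^* * uvec C t b 0 * ((uvec C t c 0)^* * uvec C t d 0)).
  move=> t; rewrite !qE mulr_suml; apply: eq_bigr => a _.
  rewrite mulr_suml; apply: eq_bigr => b _.
  rewrite mulr_sumr; apply: eq_bigr => c _.
  rewrite mulr_sumr; apply: eq_bigr => d _.
  set x := (uvec C t a 0)^*; set z := uvec C t b 0; set w := (uvec C t c 0)^*.
  set r := uvec C t d 0.
  by rewrite (mulrAC x) (mulrC (x * z)) (mulrAC w) (mulrC (w * r)) mulrACA.
under eq_bigr do rewrite E.
rewrite exchange_big mulr_sumr; apply: eq_bigr => a _.
rewrite exchange_big mulr_sumr; apply: eq_bigr => b _.
rewrite exchange_big mulr_sumr mulr_sumr; apply: eq_bigr => c _.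
rewrite exchange_big mulr_sumr mulr_sumr; apply: eq_bigr => d _.
rewrite -mulr_sumr W mulrCA mulrA.
by rewrite !mulrA.
Qed.

Lemma design (C : numClosedFieldType) n (A B : 'M[C]_n) :
  \sum_a A a a * B a a + (4 ^ n)%:R^-1 *
     \sum_(t : {ffun 'I_n -> 'I_4}) q (uvec C t) A * q (uvec C t) B
  = \tr A * \tr B + \tr (A *m B).
Proof.
rewrite qq_sum mulrA mulVf ?pnatr_eq0 ?expn_eq0 // mul1r.
under [X in _ + X]eq_bigr => a _ do under eq_bigr => b _ do rewrite inner mulrDr [X in _ + X]mulrCA [X in _ + X]mulrC.
under [X in _ + X]eq_bigr => a _ do rewrite big_split /= sum_delta.
rewrite big_split /= -trmul addrCA [RHS]addrC; congr (_ + _).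
rewrite -big_split /= /mxtrace mulr_suml; apply: eq_bigr => a _.
by rewrite mulrBr addrC subrK.
Qed.

Lemma tr_pos (C : numClosedFieldType) n (A : 'M[C]_n) : 0 <= \tr (A *m adj A).
Proof.
apply: sumr_ge0 => a _; rewrite mxE; apply: sumr_ge0 => b _.
by rewrite mxE mul_conjC_ge0.
Qed.

Lemma herm_bound (C : numClosedFieldType) n (M : 'M[C]_n) :
  adj M = M -> \tr M = n%:R -> n%:R <= \tr (M *m M).
Proof.
move=> hA hT.
have trN : \tr (M - 1%:M) = 0 by rewrite linearB /= hT mxtrace1 subrr.
have adjN : adj (M - 1%:M) = M - 1%:M by rewrite cadjD cadjN cadj1 hA.
have -> : M *m M = (M - 1%:M + 1%:M) *m (M - 1%:M + 1%:M) by rewrite subrK.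
move: (M - 1%:M) trN adjN => N trN adjN.
rewrite mulmxDl !mulmxDr !mulmx1 mul1mx !mxtraceD trN mxtrace1 !add0r addr0.
rewrite lerDr -{2}adjN; exact: tr_pos.
Qed.

Lemma trMM (C : numClosedFieldType) n (K : seq 'M[C]_n) :
  trace_preserving K ->
  n%:R <= \sum_(k <- K) \sum_(l <- K) \tr (adj k *m l *m (adj l *m k)).
Proof.
move=> hTP; set M := \sum_(k <- K) k *m adj k.
have E1 : \sum_(k <- K) \sum_(l <- K) \tr (adj k *m l *m (adj l *m k)) = \tr (M *m M).
  rewrite /M mulmx_suml linear_sum; apply: eq_bigr => k _.
  rewrite mulmx_sumr linear_sum; apply: eq_bigr => l _.
  rewrite !mulmxA mxtrace_mulC !mulmxA.
  by [].
have trM : \tr M = n%:R.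
  rewrite /M linear_sum -mxtrace1 -hTP linear_sum; apply: eq_bigr => k _.
  exact: mxtrace_mulC.
have adjM : adj M = M.
  by rewrite /M cadj_sum; apply: eq_bigr => k _; rewrite cadj_mul cadjK.
by rewrite E1; apply: herm_bound.
Qed.

Lemma final_arith (C : numClosedFieldType) (n : nat) (P T eps : C) : (0 < n)%N ->
  n%:R <= T ->
  n%:R ^+ 2 * P + T <= n%:R * (1 - eps) + n%:R ^+ 2 * (1 - eps) ->
  P <= 1 - eps * n.+1%:R / n%:R.
Proof.
move=> n0 hT hS.
have N0 : (n%:R : C) != 0 by rewrite pnatr_eq0 -lt0n.
have Np : 0 < (n%:R : C) ^+ 2 by rewrite exprn_gt0 // ltr0n.
rewrite -(ler_pM2l Np).
have -> : (n%:R : C) ^+ 2 * (1 - eps * n.+1%:R / n%:R)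
   = n%:R * (1 - eps) + n%:R ^+ 2 * (1 - eps) - n%:R.
  set N : C := n%:R.
  rewrite -natr1 -/N mulrBr mulr1 expr2 -(mulrA N N) [N * (_ / N)]mulrC divfK //.
  rewrite !mulrBr !mulr1 mulrDr mulr1 [RHS]addrAC (addrAC N) subrr add0r.
  rewrite mulrDr opprD addrA addrC; congr (_ + _); congr (_ - _); by rewrite mulrA mulrAC.
rewrite lerBrDr; apply: le_trans hS; by rewrite lerD2l.
Qed.

Lemma uvec_norm (C : numClosedFieldType) n (t : {ffun 'I_n -> 'I_4}) :
  adj (uvec C t) *m uvec C t = (n%:R : C)%:M.
Proof.
apply/matrixP=> i j; rewrite !ord1 !mxE eqxx mulr1n.
rewrite (eq_bigr (fun _ => 1)) ?sumr_const ?card_ord // => x _.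
rewrite !mxE conj_iexp -exprD -{2}(mul1n (t x)) -mulnDl.
by rewrite exprM i4 expr1n.
Qed.

Theorem proposition1 (C : numClosedFieldType) (n : nat) (hn : (2 <= n)%N)
  (K : seq 'M[C]_n) (hTP : trace_preserving K) (eps : C) :
  (forall v : 'cV[C]_n, adj v *m v = 1%:M ->
     purity (kraus_apply K (v *m adj v)) <= 1 - eps) ->
  purity (jamiolkowski K) <= 1 - eps * (n.+1)%:R / n%:R.
Proof.
move=> H.
have n0 : (0 < n)%N by apply: leq_trans hn.
have N0 : (n%:R : C) != 0 by rewrite pnatr_eq0 -lt0n.
set Q := 1 - eps.
pose X (x : 'cV[C]_n) := \sum_(k <- K) \sum_(l <- K) q x (adj k *m l) * q x (adj l *m k).
have h1 : forall a : 'I_n, X (ev C a) <= Q.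
  by move=> a; rewrite /X -purity_vec; apply: H; apply: ev_unit.
set s : C := sqrtC (n%:R^-1).
have hs : s^* * s = n%:R^-1.
  have s0 : 0 <= s by rewrite sqrtC_ge0 invr_ge0 ler0n.
  by rewrite geC0_conj // -expr2 sqrtCK.
have h2 : forall t : {ffun 'I_n -> 'I_4}, X (uvec C t) <= n%:R ^+ 2 * Q.
  move=> t; have hv : adj (s *: uvec C t) *m (s *: uvec C t) = 1%:M.
    by rewrite cadjZ -scalemxAl -scalemxAr uvec_norm scalerA hs scale_scalar_mx mulVf.
  move: (H _ hv); rewrite purity_vec.
  under eq_bigr do under eq_bigr do rewrite !q_scale hs mulrACA -expr2.
  under eq_bigr do rewrite -mulr_sumr.
  rewrite -mulr_sumr -/(X _) => hX.
  have hp : 0 < (n%:R^-1 : C) ^+ 2 by rewrite exprn_gt0 // invr_gt0 ltr0n.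
  by rewrite -(ler_pM2l hp) mulrA -exprMn mulVf // expr1n mul1r.
pose S := \sum_(k <- K) \sum_(l <- K)
   (\tr (adj k *m l) * \tr (adj l *m k) + \tr (adj k *m l *m (adj l *m k))).
have hS : S = \sum_a X (ev C a) + (4 ^ n)%:R^-1 * \sum_t X (uvec C t).
  have e1 : \sum_a X (ev C a) = \sum_(k <- K) \sum_(l <- K)
       \sum_a (adj k *m l) a a * (adj l *m k) a a.
    rewrite /X exchange_big; apply: eq_bigr => k _.
    rewrite exchange_big; apply: eq_bigr => l _.
    by apply: eq_bigr => a _; rewrite !q_ev.
  have e2 : (4 ^ n)%:R^-1 * \sum_t X (uvec C t) = \sum_(k <- K) \sum_(l <- K)
       (4 ^ n)%:R^-1 * \sum_t q (uvec C t) (adj k *m l) * q (uvec C t) (adj l *m k).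
    rewrite /X exchange_big mulr_sumr; apply: eq_bigr => k _.
    rewrite exchange_big mulr_sumr; apply: eq_bigr => l _.
    by [].
  rewrite e1 e2 -big_split; apply: eq_bigr => k _.
  rewrite -big_split; apply: eq_bigr => l _.
  by rewrite /= design.
have hle : S <= n%:R * Q + n%:R ^+ 2 * Q.
  rewrite hS; apply: lerD.
    apply: le_trans (_ : \sum_(a < n) Q <= _); first by apply: ler_sum => a _; apply: h1.
    by rewrite sumr_const card_ord mulr_natl.
  apply: le_trans (_ : (4 ^ n)%:R^-1 * \sum_(t : {ffun 'I_n -> 'I_4}) n%:R ^+ 2 * Q <= _).
    by rewrite ler_wpM2l ?invr_ge0 ?ler0n //; apply: ler_sum => t _; apply: h2.
  rewrite sumr_const card_ffun !card_ord -[n%:R ^+ 2 * Q *+ _]mulr_natr mulrCA mulVf ?mulr1 //.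
  by rewrite pnatr_eq0 expn_eq0.

have hP := jam_purity K.
apply: (final_arith n0 (trMM hTP)).
move: hle; rewrite /S; under eq_bigr do rewrite big_split; rewrite big_split /=.
have -> : \sum_(k <- K) \sum_(l <- K) \tr (adj k *m l) * \tr (adj l *m k)
   = n%:R ^+ 2 * purity (jamiolkowski K).
  by rewrite hP mulrA mulfV ?mul1r // expf_neq0.
by [].
Qed.
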